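(* Let $W=\mathfrak{S}_n$, $1\le c\le n-2$, and let $w_2\in\mathfrak{S}_n$ with $w_2^2=1$. Suppose $\ell(s_{c+1}s_cw_2s_c)=\ell(w_2)+3$, $s_cw_2\neq w_2s_c$, $s_{c+1}s_cw_2s_c=s_cw_2s_cs_{c+1}$ and $s_{c+1}w_2s_c<w_2s_c$. Then $s_{c+1}w_2<w_2$.
   Context: $s_j=(j,j+1)$; $\ell$ is the Coxeter length of $\mathfrak{S}_n$ and $<$ is the Bruhat order. *)

(* Defs.v *)
From HB Require Import structures.
From mathcomp Require Import all_boot all_order all_fingroup.
Set Implicit Arguments. Unset Strict Implicit. Unset Printing Implicit Defensive.
Local Open Scope group_scope.

(* Symmetric group S_n on {1,...,n}, realised as 'S_n = {perm 'I_n}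
   (point k of {1..n} is the ordinal k-1). *)

(* Simple transposition s_j = (j, j+1) for 1 <= j <= n-1; in 0-based
   ordinals it swaps j-1 and j.  (Out of range j gives the identity; such j
   are never used.) *)
Definition sref (n j : nat) : 'S_n :=
  match @insub _ (fun k => k < n) ('I_n) j.-1, @insub _ (fun k => k < n) ('I_n) j with
  | Some a, Some b => tperm a b
  | _, _ => 1
  end.

Definition has_word (n : nat) (w : 'S_n) (k : nat) : bool :=
  [exists t : k.-tuple 'I_n.-1, (\prod_(i <- t) sref n i.+1) == w].

(* Coxeter length: the least k such that w is a product of k simple
   transpositions.  The search range 0..n*n-1 contains the length
   (which is at most n(n-1)/2). *)
Definition coxlen (n : nat) (w : 'S_n) : nat :=
  find (has_word w) (iota 0 (n * n)).

Definition bruhat_step (n : nat) (u v : 'S_n) : bool :=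
  [exists a : 'I_n, exists b : 'I_n,
     [&& a != b, v == u * tperm a b & coxlen u < coxlen v]].

Definition bruhat_le (n : nat) (u v : 'S_n) : bool := connect (@bruhat_step n) u v.
Definition bruhat_lt (n : nat) (u v : 'S_n) : bool := (u != v) && bruhat_le u v.

(* Main.v *)
Require Import Defs.
From mathcomp Require Import all_boot all_order all_fingroup.
From mathcomp Require Import zify.
Set Implicit Arguments. Unset Strict Implicit. Unset Printing Implicit Defensive.
Local Open Scope group_scope.

Lemma adj_lt n (a b i j : 'I_n) : nat_of_ord b = (nat_of_ord a).+1 ->
  ~~ ((i == a) && (j == b)) -> ~~ ((i == b) && (j == a)) ->
  (tperm a b i < tperm a b j)%N = (i < j)%N.
Proof.
move=> hab.
case: (tpermP a b i) => [Hi|Hi|Hi1 Hi2]; case: (tpermP a b j) => [Hj|Hj|Hj1 Hj2]; subst => //=.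
all: try (have Hi1' : nat_of_ord i <> nat_of_ord a by move=> /ord_inj).
all: try (have Hi2' : nat_of_ord i <> nat_of_ord b by move=> /ord_inj).
all: try (have Hj1' : nat_of_ord j <> nat_of_ord a by move=> /ord_inj).
all: try (have Hj2' : nat_of_ord j <> nat_of_ord b by move=> /ord_inj).
all: rewrite -?(inj_eq (@ord_inj n)) /= => h1 h2.
all: try lia.
all: apply/idP/idP => ?; lia.
Qed.
Definition invn n (w : 'S_n) : nat :=
  (\sum_(p : 'I_n * 'I_n) ((p.1 < p.2)%N && (w p.2 < w p.1)%N))%N.

Lemma inv_mul n (a b : 'I_n) (w : 'S_n) : nat_of_ord b = (nat_of_ord a).+1 ->
  (invn (tperm a b * w) + (w b < w a)%N = invn w + (w a < w b)%N)%N.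
Proof.
move=> hab; rewrite /invn.
have hinj : injective (fun p : 'I_n * 'I_n => (tperm a b p.1, tperm a b p.2)).
  by move=> [x y] [x' y'] /= [/perm_inj -> /perm_inj ->].
rewrite (reindex_inj hinj) /=.
under eq_bigr => p _ do rewrite !permM !tpermK.
have hba : (b, a) != (a, b).
  by rewrite xpair_eqE -!(inj_eq (@ord_inj n)) hab; apply/negP => /andP[/eqP]; lia.
rewrite (bigD1 (a,b)) //= (bigD1 (b,a)) //=.
rewrite [in RHS](bigD1 (a,b)) //= [in RHS](bigD1 (b,a)) //=.
rewrite tpermL tpermR.

rewrite (eq_bigr (fun p : 'I_n * 'I_n => nat_of_bool ((p.1 < p.2)%N && (w p.2 < w p.1)%N))); last first.
  by move=> [i j] /andP[h1 h2] /=; rewrite adj_lt.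
rewrite hab ltnSn /=.
have -> : (a.+1 < a)%N = false by lia.
rewrite /=; lia.
Qed.

Lemma invn1 n : invn (1 : 'S_n) = 0%N.
Proof. by rewrite /invn big1 // => p _; rewrite !perm1; case: ltngtP. Qed.

Lemma sref_cases n j : sref n j = 1 \/ exists a b : 'I_n,
  [/\ sref n j = tperm a b, nat_of_ord a = j.-1 & nat_of_ord b = j].
Proof.
rewrite /sref; case: (insubP 'I_n j.-1) => [a _ ha|_]; case: (insubP 'I_n j) => [b _ hb|_]; try by left.
by right; exists a, b.
Qed.

Lemma sref_in n (a b : 'I_n) : nat_of_ord b = (nat_of_ord a).+1 -> sref n b = tperm a b.
Proof.
move=> hab; rewrite /sref; case: (insubP 'I_n (nat_of_ord b).-1) => [a' _ ha'|]; last by rewrite hab /= ltn_ord.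
case: (insubP 'I_n (nat_of_ord b)) => [b' _ hb'|]; last by rewrite ltn_ord.
have -> : a' = a by apply: ord_inj; rewrite ha' hab.
by have -> : b' = b by apply: ord_inj; rewrite hb'.
Qed.

Lemma inv_sref_le n j (u : 'S_n) : (invn (sref n j * u) <= invn u + 1)%N.
Proof.
case: (sref_cases n j) => [->|[a [b [-> ha hb]]]]; first by rewrite mul1g; lia.
case: j ha hb => [|j] ha hb.
  have -> : a = b by apply: ord_inj; rewrite ha hb.
  by rewrite tperm1 mul1g; lia.
have hab : nat_of_ord b = (nat_of_ord a).+1 by rewrite ha hb.
have := inv_mul u hab; case: (u b < u a)%N; case: (u a < u b)%N => /=. all: move=> hh; set X := invn _ in hh *; set Y := invn u in hh *. all: lia.
Qed.

Lemma inv_word_le n (t : seq 'I_n.-1) :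
  (invn (\prod_(i <- t) sref n i.+1) <= size t)%N.
Proof.
elim: t => [|x t IH]; first by rewrite big_nil invn1.
rewrite big_cons /=; have := inv_sref_le x.+1 (\prod_(i <- t) sref n i.+1).
move: IH; set X := invn _; set Y := invn _; lia.
Qed.

Lemma has_word_ge n (w : 'S_n) k : has_word w k -> (invn w <= k)%N.
Proof.
by move=> /existsP[t /eqP <-]; have := inv_word_le t; rewrite size_tuple.
Qed.

Lemma ge_of_inc n (f : 'S_n) : (forall i j : 'I_n, (i < j)%N -> (f i < f j)%N) ->
  forall i : 'I_n, (i <= f i)%N.
Proof.
move=> inc.
have ge : forall k (i : 'I_n), nat_of_ord i = k -> (k <= f i)%N.
  elim=> [|k IH] i hi; first lia.
  have hm : (k < n)%N by have := ltn_ord i; lia.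
  have := IH (Ordinal hm) erefl; have := inc (Ordinal hm) i; rewrite /=; lia.
by move=> i; apply: ge.
Qed.

Lemma no_desc_1 n (w : 'S_n) :
  (forall a b : 'I_n, nat_of_ord b = (nat_of_ord a).+1 -> (w a < w b)%N) -> w = 1.
Proof.
move=> H.
have inc : forall d (i j : 'I_n), nat_of_ord j = (i + d.+1)%N -> (w i < w j)%N.
  elim=> [|d IH] i j hj; first by apply: H; lia.
  have hm : (i + d.+1 < n)%N by have := ltn_ord j; lia.
  apply: (ltn_trans (IH i (Ordinal hm) erefl)); apply: H => /=; lia.
have inc' : forall i j : 'I_n, (i < j)%N -> (w i < w j)%N.
  by move=> i j hij; apply: (inc (j - i.+1)%N); lia.
have incV : forall i j : 'I_n, (i < j)%N -> (w^-1 i < w^-1 j)%N.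
  move=> i j hij; case: (ltngtP (w^-1 i) (w^-1 j)) => // h.
    by have := inc' _ _ h; rewrite !permKV; lia.
  have : i = j by rewrite -(permKV w i) -(permKV w j) (ord_inj h).
  by move=> e; rewrite e ltnn in hij.
apply/permP => i; rewrite perm1; apply: ord_inj.
have h1 := ge_of_inc inc' i; have h2 := ge_of_inc incV (w i).
by rewrite permK in h2; lia.
Qed.

Lemma desc_or_1 n (w : 'S_n) : w = 1 \/
  exists a b : 'I_n, nat_of_ord b = (nat_of_ord a).+1 /\ (w b < w a)%N.
Proof.
case: (boolP [exists a : 'I_n, exists b : 'I_n,
   (nat_of_ord b == (nat_of_ord a).+1) && (w b < w a)%N]).
  by move=> /existsP[a /existsP[b /andP[/eqP h1 h2]]]; right; exists a, b.
move=> /existsPn H; left; apply: no_desc_1 => a b hab.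
have := H a => /existsPn /(_ b); rewrite hab eqxx /= -leqNgt.
have : w a != w b by rewrite (inj_eq perm_inj); apply/eqP => e; move: hab; rewrite e; lia.
rewrite -(inj_eq (@ord_inj n)); lia.
Qed.

Lemma has_word_inv n (w : 'S_n) : has_word w (invn w).
Proof.
suff: forall k (w : 'S_n), invn w = k -> has_word w k by move=> /(_ _ w erefl).
elim=> [|k IH] {}w hk.
  case: (desc_or_1 w) => [->|[a [b [hab hd]]]].
    by apply/existsP; exists [tuple]; rewrite big_nil.
  by have := inv_mul w hab; rewrite hk hd; lia.
case: (desc_or_1 w) => [e|[a [b [hab hd]]]].
  by move: hk; rewrite e invn1.
have hw' : invn (tperm a b * w) = k by have := inv_mul w hab; rewrite hk hd; lia.
have /existsP[t /eqP ht] := IH _ hw'.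
have hi : (nat_of_ord a < n.-1)%N by have := ltn_ord b; lia.
apply/existsP; exists [tuple of (Ordinal hi) :: t]; rewrite big_cons /= ht.
have -> : (nat_of_ord a).+1 = nat_of_ord b by [].
by rewrite (sref_in hab) mulgA tperm2 mul1g.
Qed.

Lemma invn_lt n (w : 'S_n) : (0 < n)%N -> (invn w < n * n)%N.
Proof.
move=> hn; set i0 : 'I_n := Ordinal hn.
rewrite /invn (bigD1 (i0, i0)) //=.
rewrite add0n.
apply: (@leq_ltn_trans (\sum_(p | p != (i0, i0)) 1)%N).
  by apply: leq_sum => p _; case: (_ && _).
rewrite sum1_card cardC1 card_prod card_ord.
have : (0 < n * n)%N by rewrite muln_gt0 hn.
lia.
Qed.

Lemma coxlenE n (w : 'S_n) : (0 < n)%N -> coxlen w = invn w.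
Proof.
move=> hn; have hlt := invn_lt w hn.
rewrite /coxlen.
have hh : has (has_word w) (iota 0 (n * n)).
  by apply/hasP; exists (invn w); [rewrite mem_iota; lia | apply: has_word_inv].
have hs := hh; rewrite has_find size_iota in hs.
case: (ltngtP (find (has_word w) (iota 0 (n * n))) (invn w)) => h //.
  have := nth_find 0 hh; rewrite nth_iota // add0n => /has_word_ge; lia.
have := before_find 0 h; rewrite nth_iota // add0n has_word_inv //.
Qed.

Lemma key n (P Q R : 'I_n) (w : 'S_n) : nat_of_ord Q = (nat_of_ord P).+1 ->
  nat_of_ord R = (nat_of_ord Q).+1 -> (forall x, w (w x) = x) ->
  (tperm P Q (w R) < tperm P Q (w Q))%N -> (w R < w Q)%N.
Proof.
move=> hPQ hQR hw.
case: (ltngtP (w R) (w Q)) => // h; last first.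
  by have /perm_inj e := ord_inj h; move: hQR; rewrite e; lia.
have hwR := hw R; have hwQ := hw Q.
case: (tpermP P Q (w R)) => [hR|hR|hR1 hR2]; case: (tpermP P Q (w Q)) => [hQ|hQ|hQ1 hQ2].
all: try (have hR1' : nat_of_ord (w R) <> nat_of_ord P by move=> /ord_inj).
all: try (have hR2' : nat_of_ord (w R) <> nat_of_ord Q by move=> /ord_inj).
all: try (have hQ1' : nat_of_ord (w Q) <> nat_of_ord P by move=> /ord_inj).
all: try (have hQ2' : nat_of_ord (w Q) <> nat_of_ord Q by move=> /ord_inj).
all: try rewrite hR in h hwR *; try rewrite hQ in h hwQ hwR *.
all: try (move: hwR => /(congr1 (@nat_of_ord n)) hwR).
all: move=> hh; lia.
Qed.

Lemma path_le n (u : 'S_n) p : path (@bruhat_step n) u p -> (coxlen u <= coxlen (last u p))%N.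
Proof.
elim: p u => [|x p IH] u //= /andP[/existsP[a /existsP[b /and3P[_ _ hlt]]] hp].
by have := IH _ hp; lia.
Qed.

Lemma bruhat_lt_len n (u v : 'S_n) : bruhat_lt u v -> (coxlen u < coxlen v)%N.
Proof.
move=> /andP[neq /connectP[p hp e]]; subst v.
case: p hp neq => [|x p] /=; first by rewrite eqxx.
move=> /andP[/existsP[a /existsP[b /and3P[_ _ hlt]]] hp] _.
exact: (leq_trans hlt (path_le hp)).
Qed.

Unset Implicit Arguments.
Set Strict Implicit.

Theorem lemma2p18 (n c : nat) (w2 : 'S_n) :
  1 <= c -> c <= n - 2 ->
  w2 * w2 = 1 ->
  coxlen (sref n c.+1 * sref n c * w2 * sref n c) = (coxlen w2 + 3)%N ->
  sref n c * w2 != w2 * sref n c ->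
  sref n c.+1 * sref n c * w2 * sref n c = sref n c * w2 * sref n c * sref n c.+1 ->
  bruhat_lt (sref n c.+1 * w2 * sref n c) (w2 * sref n c) ->
  bruhat_lt (sref n c.+1 * w2) w2.
Proof.
move=> hc1 hc2 hinv _ _ _ hb.
have hn : (0 < n)%N by lia.
have hP : (c.-1 < n)%N by lia.
have hQ : (c < n)%N by lia.
have hR : (c.+1 < n)%N by lia.
set P := Ordinal hP; set Q := Ordinal hQ; set R := Ordinal hR.
have hPQ : nat_of_ord Q = (nat_of_ord P).+1 by rewrite /= prednK.
have hQR : nat_of_ord R = (nat_of_ord Q).+1 by [].
have es : sref n c = tperm P Q by rewrite -(sref_in hPQ).
have et : sref n c.+1 = tperm Q R by rewrite -(sref_in hQR).
rewrite es et in hb *.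
have hw : forall x, w2 (w2 x) = x by move=> x; rewrite -permM hinv perm1.
have := bruhat_lt_len hb; rewrite !coxlenE // -mulgA.
have := inv_mul (w2 * tperm P Q) hQR; rewrite !permM.
set X := invn _; set Y := invn _.
move=> e1 hlt.
have hlt' : (tperm P Q (w2 R) < tperm P Q (w2 Q))%N.
  by move: e1 hlt; case: (_ < _)%N; case: (_ < _)%N => /=; lia.
have hkey := key hPQ hQR hw hlt'.
apply/andP; split.
  apply/eqP => e; have : (tperm Q R * w2) Q = w2 Q by rewrite e.
  by rewrite permM tpermL => /perm_inj /(congr1 (@nat_of_ord n)); rewrite hQR; lia.
apply: connect1; apply/existsP; exists (w2 Q); apply/existsP; exists (w2 R); apply/and3P; split.
- by rewrite (inj_eq perm_inj) -(inj_eq (@ord_inj n)) hQR; apply/eqP; lia.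
- by rewrite -tpermJ conjgE !mulgA mulgK tperm2 mul1g.
rewrite !coxlenE //.
have := inv_mul w2 hQR; rewrite hkey.
have -> : (w2 Q < w2 R)%N = false by lia.
set X' := invn _; set Y' := invn _; rewrite /=; lia.
Qed.
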